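(* Let $n,k,t$ be positive integers with $k<n$ and $t\ge 4$, let $q$ be a prime power and $\mathcal{D}$ the Desarguesian $(t-1)$-spread of $\mathrm{PG}(nt-1,q)$. Let $\nu$ be a $\mathcal{D}_{n-k-1}$-subspace, $\Pi$ an $(nt-kt+1)$-dimensional subspace containing $\nu$ such that the points of $\mathcal{B}(\Pi)$ span an $(n-k+1)$-dimensional subspace of $\mathrm{PG}(n-1,q^t)$, $\Omega$ an $(nt-kt-2)$-dimensional subspace of $\Pi$ meeting $\nu$ in an $(nt-kt-4)$-dimensional subspace, $\Gamma$ a plane of $\Pi$ skew from $\Omega$, $\bar{B}$ a minimal blocking set of $\Gamma$ disjoint from $\nu$, and $K$ the cone with vertex $\Omega$ and base $\bar{B}$. Then $$|\mathcal{B}(K)|=|\bar{B}|(q^{nt-kt-1}-q^{nt-kt-3})+q^{nt-kt-2}+q^{nt-kt-3}+\epsilon$$ for some integer $\epsilon\ge 1$.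
   Context: Field reduction: each point of $\mathrm{PG}(n-1,q^t)$ corresponds to a $(t-1)$-dimensional subspace of $\mathrm{PG}(nt-1,q)$; these form the Desarguesian $(t-1)$-spread $\mathcal{D}$. A $\mathcal{D}_{r-1}$-subspace is an $(rt-1)$-dimensional subspace spanned by elements of $\mathcal{D}$. For $U\subseteq\mathrm{PG}(nt-1,q)$, $\mathcal{B}(U)$ is the set of elements of $\mathcal{D}$ meeting $U$, identified with points of $\mathrm{PG}(n-1,q^t)$. The cone with vertex $\Omega$ and base $\bar{B}$ is $\bigcup_{P\in\bar B}\langle P,\Omega\rangle$. A minimal blocking set of a plane is a point set meeting every line, no proper subset of which does so. *)

(* Defs.v *)
(* Field reduction model:
   GF(q^t) = L (a finite field with #|L| = q^t), GF(q) = {x in L | x^q = x},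
   V(n, q^t) = 'rV[L]_n, viewed as an (nt)-dimensional GF(q)-space.
   Projective subspaces of PG(nt-1,q) = GF(q)-subspaces of V (as vector sets);
   elements of the Desarguesian spread = 1-dim L-subspaces of V. *)
From mathcomp Require Import all_boot all_order all_algebra.
Set Implicit Arguments. Unset Strict Implicit. Unset Printing Implicit Defensive.
Import GRing.Theory.
Local Open Scope ring_scope.

Definition is_prime_power (q : nat) : Prop :=
  exists p e : nat, [/\ prime p, (0 < e)%N & q = (p ^ e)%N].

Section FieldReduction.
Variables (L : finFieldType) (q : nat) (n : nat).
Local Notation V := 'rV[L]_n.

Definition Fq : {set L} := [set x | x ^+ q == x].

Definition qsub (W : {set V}) : bool :=
  [&& 0 \in W, [forall x in W, forall y in W, x + y \in W]
    & [forall c in Fq, forall x in W, c *: x \in W]].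

(* W is a projective subspace of PG(nt-1,q) of projective dimension m
   (GF(q)-vector dimension m+1, i.e. q^(m+1) vectors) *)
Definition pdim (W : {set V}) (m : nat) : Prop :=
  qsub W /\ #|W| = (q ^ m.+1)%N.

Definition qspan (S : {set V}) : {set V} :=
  [set v | [forall W : {set V}, (qsub W && (S \subset W)) ==> (v \in W)]].

(* L-subspaces of V, i.e. projective subspaces of PG(n-1,q^t) *)
Definition Lsub (W : {set V}) : bool :=
  [&& 0 \in W, [forall x in W, forall y in W, x + y \in W]
    & [forall c : L, forall x in W, c *: x \in W]].

Definition Lspan (S : {set V}) : {set V} :=
  [set v | [forall W : {set V}, (Lsub W && (S \subset W)) ==> (v \in W)]].

Definition Ldim (W : {set V}) (d : nat) : Prop :=
  Lsub W /\ #|W| = (#|L| ^ d.+1)%N.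

Definition Lline (v : V) : {set V} := [set c *: v | c : L].

Definition spread_elt (X : {set V}) : Prop :=
  exists2 v : V, v != 0 & X = Lline v.

(* B(U): the spread elements meeting U (identified with points of PG(n-1,q^t)) *)
Definition Bset (U : {set V}) : {set {set V}} :=
  [set Lline v | v in U :\ 0].

(* a D_{r-1}-subspace: an (rt-1)-dimensional subspace spanned by spread elements *)
Definition Dsub (t : nat) (nu : {set V}) (r : nat) : Prop :=
  pdim nu (r * t).-1 /\
  exists S : {set {set V}},
    (forall X, X \in S -> spread_elt X) /\ nu = qspan (\bigcup_(X in S) X).

(* points of PG(nt-1,q) are projective subspaces of dimension 0 *)
Definition blocks (Gamma : {set V}) (B : {set {set V}}) : Prop :=
  forall l : {set V}, pdim l 1 -> l \subset Gamma ->
    exists2 P, P \in B & P \subset l.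

Definition minimal_blocking_set (Gamma : {set V}) (B : {set {set V}}) : Prop :=
  [/\ forall P, P \in B -> pdim P 0 /\ P \subset Gamma,
      blocks Gamma B
    & forall B' : {set {set V}}, B' \proper B -> ~ blocks Gamma B'].

Definition cone (Omega : {set V}) (B : {set {set V}}) : {set V} :=
  \bigcup_(P in B) qspan (P :|: Omega).

End FieldReduction.

(* Main.v *)
Require Import Defs.
From mathcomp Require Import all_boot all_order all_algebra.
From mathcomp Require Import all_field zify ring.
Set Implicit Arguments. Unset Strict Implicit. Unset Printing Implicit Defensive.
Import GRing.Theory.
Local Open Scope ring_scope.


Section FqFacts.
Variables (L : finFieldType) (q t : nat).
Hypothesis Hq : is_prime_power q.
Hypothesis HL : #|L| = (q ^ t)%N.
Hypothesis Ht : (0 < t)%N.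

Lemma q_gt1 : (1 < q)%N.
Proof. by case: Hq => p [e] [pp e0 ->]; rewrite -(exp1n e) ltn_exp2r // prime_gt1. Qed.

Lemma q_nat : [pchar L].-nat q.
Proof.
case: Hq => p [e] [pp e0 qE].
have pc : p \in [pchar L].
  apply: (@card_finPcharP _ p (e * t)) => //. rewrite expnM -qE -HL. by [].
rewrite qE pnatX; apply/orP; left.
by rewrite (pnatE _ pp).
Qed.

Lemma Fq_in x : (x \in Fq L q) = (x ^+ q == x).
Proof. by rewrite inE. Qed.

Lemma Fq0 : (0 : L) \in Fq L q.
Proof. by rewrite Fq_in expr0n; case: q q_gt1. Qed.

Lemma Fq1 : (1 : L) \in Fq L q.
Proof. by rewrite Fq_in expr1n. Qed.

Lemma FqD x y : x \in Fq L q -> y \in Fq L q -> x + y \in Fq L q.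
Proof. by rewrite !Fq_in (exprDn_pchar _ _ q_nat) => /eqP-> /eqP->. Qed.

Lemma FqN x : x \in Fq L q -> - x \in Fq L q.
Proof. by rewrite !Fq_in (exprNn_pchar _ q_nat) => /eqP->. Qed.

Lemma FqB x y : x \in Fq L q -> y \in Fq L q -> x - y \in Fq L q.
Proof. by move=> hx hy; apply: FqD => //; apply: FqN. Qed.

Lemma FqM x y : x \in Fq L q -> y \in Fq L q -> x * y \in Fq L q.
Proof. by rewrite !Fq_in exprMn => /eqP-> /eqP->. Qed.

Lemma FqV x : x \in Fq L q -> x^-1 \in Fq L q.
Proof. by rewrite !Fq_in exprVn => /eqP->. Qed.

Lemma card_Fq_le : (#|Fq L q| <= q)%N.
Proof.
have q1 := q_gt1.
set p : {poly L} := 'X^q - 'X.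
have sp : size p = q.+1.
  rewrite /p size_polyDl ?size_polyXn // size_polyN size_polyX; by [].
have p0 : p != 0 by rewrite -size_poly_eq0 sp.
have := @max_poly_roots _ p (enum (Fq L q)) p0.
rewrite sp cardE ltnS; apply; last exact: enum_uniq.
apply/allP => x; rewrite mem_enum Fq_in => /eqP hx.
by rewrite /root /p !hornerE hx subrr.
Qed.


Lemma geom_nat : ((q - 1) * (\sum_(i < t) q ^ i) + 1 = q ^ t)%N.
Proof.
have q1 := q_gt1.
elim: (t) => [|u IH]; first by rewrite big_ord0 muln0.
rewrite big_ord_recr /= mulnDr -addnAC IH expnS.
rewrite mulnBl mul1n addnC subnK //.
by rewrite leq_pmull // ltnW.
Qed.

Lemma card_Fq_ge : (q <= #|Fq L q|)%N.
Proof.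
have q1 := q_gt1.
set s := (\sum_(i < t) q ^ i)%N.
have hs := geom_nat; rewrite -/s in hs.
have s0 : (0 < s)%N.
  rewrite lt0n; apply/eqP => s0; move: hs; rewrite s0 muln0 add0n => h.
  by move: (ltn_exp2l 0 t q1); rewrite -h expn0 Ht.
set r : {poly L} := \sum_(j < s) 'X^((q - 1) * j).
have r0 : r != 0.
  apply/eqP => r0; have : r.[0] = 1.
    rewrite /r horner_sum -(prednK s0).
    rewrite big_ord_recl /= muln0 hornerXn expr0n /= big1 ?addr0 // => j _.
    by rewrite hornerXn expr0n muln_eq0 subn_eq0 leqNgt q1.
  by rewrite r0 horner0 => /eqP; rewrite eq_sym oner_eq0.
have sr : (size r <= (q - 1) * (s - 1) + 1)%N.
  apply: leq_trans (size_sum _ _ _) _; apply/bigmax_leqP => j _.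
  rewrite size_polyXn addn1 ltnS leq_mul2l; apply/orP; right.
  by rewrite -ltnS subn1 prednK // ltn_ord.
have := @max_poly_roots _ r (enum (~: Fq L q)) r0.
have -> : all (root r) (enum (~: Fq L q)).
  apply/allP => x; rewrite mem_enum inE Fq_in => hx.
  have x0 : x != 0 by apply: contraNneq hx => ->; rewrite expr0n; case: q q1.
  set y := x ^+ (q - 1).
  have y1 : y != 1.
    apply: contraNneq hx => hy; apply/eqP.
    by rewrite -{1}(subnK (ltnW q1)) exprD -/y hy mul1r expr1.
  have ys : y ^+ s = 1.
    have : x ^+ (q ^ t) = x by rewrite -HL expf_card.
    rewrite -hs exprD expr1 -exprM -/y => h; apply: (mulIf x0); by rewrite mul1r.
  have : (y - 1) * \sum_(i < s) y ^+ i = 0 by rewrite -subrX1 ys subrr.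
  move/eqP; rewrite mulf_eq0 subr_eq0 (negbTE y1) /= => /eqP hsum.
  rewrite /root /r horner_sum.
  apply/eqP; rewrite -[RHS]hsum; apply: eq_bigr => j _.
  by rewrite hornerXn /y exprM.
move=> /(_ isT (enum_uniq _)); rewrite -cardE => hlt.
have := leq_trans hlt sr; rewrite addn1 ltnS => hc.
have := cardsC (Fq L q); rewrite HL -hs => hC.
have : ((q - 1) * s + 1 <= #|Fq L q| + (q - 1) * (s - 1))%N.
  by rewrite -hC leq_add2l.
rewrite mulnBr muln1 => h.
have hle : (q - 1 <= (q - 1) * s)%N by rewrite leq_pmulr.
move: h hle; set X := ((q - 1) * s)%N. lia.
Qed.

Lemma card_Fq : #|Fq L q| = q.
Proof. by apply/eqP; rewrite eqn_leq card_Fq_le card_Fq_ge. Qed.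

End FqFacts.


Section Sub.
Variables (L : finFieldType) (q n : nat).
Local Notation V := 'rV[L]_n.
Local Notation Fq := (Fq L q).
Hypothesis FqN1 : (-1 : L) \in Fq.

Definition sumset (A B : {set V}) : {set V} := [set x.1 + x.2 | x in setX A B].

Lemma mem_sumset A B v : (v \in sumset A B) <-> exists a b, [/\ a \in A, b \in B & v = a + b].
Proof.
split.
  by case/imsetP => -[a b]; rewrite inE /= => /andP[ha hb] ->; exists a, b.
by case=> a [b] [ha hb ->]; apply/imsetP; exists (a, b); rewrite // inE ha hb.
Qed.

Lemma qsubP (W : {set V}) : qsub q W <->
  [/\ 0 \in W, forall x y, x \in W -> y \in W -> x + y \in W
    & forall c x, c \in Fq -> x \in W -> c *: x \in W].
Proof.
split.
  case/and3P => h0 /forall_inP hD /forall_inP hZ; split => //.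
    by move=> x y hx hy; move: (hD x hx) => /forall_inP; apply.
  by move=> c x hc hx; move: (hZ c hc) => /forall_inP; apply.
case=> h0 hD hZ; apply/and3P; split => //.
  by apply/forall_inP => x hx; apply/forall_inP => y hy; apply: hD.
by apply/forall_inP => c hc; apply/forall_inP => x hx; apply: hZ.
Qed.

Lemma qsub0 (W : {set V}) : qsub q W -> 0 \in W. Proof. by case/qsubP. Qed.
Lemma qsubD (W : {set V}) x y : qsub q W -> x \in W -> y \in W -> x + y \in W.
Proof. by case/qsubP => _ h _; apply: h. Qed.
Lemma qsubZ (W : {set V}) c x : qsub q W -> c \in Fq -> x \in W -> c *: x \in W.
Proof. by case/qsubP => _ _ h; apply: h. Qed.
Lemma qsubN (W : {set V}) x : qsub q W -> x \in W -> - x \in W.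
Proof. by move=> hW hx; rewrite -scaleN1r; apply: qsubZ. Qed.
Lemma qsubB (W : {set V}) x y : qsub q W -> x \in W -> y \in W -> x - y \in W.
Proof. by move=> hW hx hy; apply: qsubD => //; apply: qsubN. Qed.

Lemma qsubI (A B : {set V}) : qsub q A -> qsub q B -> qsub q (A :&: B).
Proof.
move=> hA hB; apply/qsubP; split.
- by rewrite inE !qsub0.
- by move=> x y; rewrite !inE => /andP[? ?] /andP[? ?]; rewrite !qsubD.
- by move=> c x hc; rewrite !inE => /andP[? ?]; rewrite !qsubZ.
Qed.

Lemma qsub_sumset (A B : {set V}) : qsub q A -> qsub q B -> qsub q (sumset A B).
Proof.
move=> hA hB; apply/qsubP; split.
- by apply/mem_sumset; exists 0, 0; rewrite addr0 !qsub0.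
- move=> x y /mem_sumset[a [b [ha hb ->]]] /mem_sumset[a' [b' [ha' hb' ->]]].
  apply/mem_sumset; exists (a + a'), (b + b'); rewrite !qsubD //.
  by split => //; rewrite addrACA.
- move=> c x hc /mem_sumset[a [b [ha hb ->]]].
  by apply/mem_sumset; exists (c *: a), (c *: b); rewrite scalerDr !qsubZ.
Qed.

Lemma sumsetSl (A B : {set V}) : qsub q B -> A \subset sumset A B.
Proof. by move=> hB; apply/subsetP => a ha; apply/mem_sumset; exists a, 0; rewrite addr0 qsub0. Qed.
Lemma sumsetSr (A B : {set V}) : qsub q A -> B \subset sumset A B.
Proof. by move=> hA; apply/subsetP => b hb; apply/mem_sumset; exists 0, b; rewrite add0r qsub0. Qed.

Lemma sumset_sub (A B W : {set V}) : qsub q W -> A \subset W -> B \subset W -> sumset A B \subset W.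
Proof.
move=> hW /subsetP hA /subsetP hB; apply/subsetP => v /mem_sumset[a [b [ha hb ->]]].
by apply: qsubD; [|apply: hA|apply: hB].
Qed.

Lemma qspanP (S : {set V}) v : reflect (forall W, qsub q W -> S \subset W -> v \in W) (v \in qspan q S).
Proof.
rewrite inE; apply: (iffP forallP) => h W.
  by move=> hW hS; move: (h W); rewrite hW hS.
by apply/implyP => /andP[hW hS]; apply: h.
Qed.

Lemma qspan_sub (S W : {set V}) : qsub q W -> S \subset W -> qspan q S \subset W.
Proof. by move=> hW hS; apply/subsetP => v /qspanP; apply. Qed.

Lemma sub_qspan (S : {set V}) : S \subset qspan q S.
Proof. by apply/subsetP => v hv; apply/qspanP => W _ /subsetP; apply. Qed.

Lemma qsub_qspan (S : {set V}) : qsub q (qspan q S).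
Proof.
apply/qsubP; split.
- by apply/qspanP => W hW _; apply: qsub0.
- move=> x y /qspanP hx /qspanP hy; apply/qspanP => W hW hS.
  by apply: qsubD => //; [apply: hx|apply: hy].
- move=> c x hc /qspanP hx; apply/qspanP => W hW hS.
  by apply: qsubZ => //; apply: hx.
Qed.

Lemma qspan_sumset (A B : {set V}) : qsub q A -> qsub q B -> qspan q (A :|: B) = sumset A B.
Proof.
move=> hA hB; apply/eqP; rewrite eqEsubset; apply/andP; split.
  apply: qspan_sub; first exact: qsub_sumset.
  by rewrite subUset sumsetSl // sumsetSr.
apply: sumset_sub; first exact: qsub_qspan.
  exact: subset_trans (subsetUl A B) (sub_qspan _).
exact: subset_trans (subsetUr A B) (sub_qspan _).
Qed.

Lemma qspan_Lclosed (S : {set V}) c v : (forall c x, x \in S -> c *: x \in S) ->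
  v \in qspan q S -> c *: v \in qspan q S.
Proof.
move=> hS /qspanP hv.
pose W := [set y | c *: y \in qspan q S].
have memW y : (y \in W) = (c *: y \in qspan q S) by rewrite /W in_set.
have : v \in W.
  apply: hv.
  - apply/qsubP; split.
    + by rewrite memW scaler0; exact: (qsub0 (qsub_qspan S)).
    + move=> x y; rewrite !memW scalerDr => hx hy; exact: (qsubD (qsub_qspan S)).
    + move=> a x ha; rewrite !memW scalerA mulrC -scalerA => hx.
      exact: (qsubZ (qsub_qspan S)).
  - by apply/subsetP => x hx; rewrite memW; apply: (subsetP (sub_qspan S)); apply: hS.
by rewrite memW.
Qed.

Lemma card_sumset (A B : {set V}) : qsub q A -> qsub q B ->
  (#|sumset A B| * #|A :&: B| = #|A| * #|B|)%N.
Proof.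
move=> hA hB.
rewrite -sum_nat_const -cardsX; symmetry.
rewrite -sum1_card (partition_big_imset (fun x : V * V => x.1 + x.2)) /=.
apply: eq_bigr => s.
case/imsetP => -[a0 b0]; rewrite inE /= => /andP[ha0 hb0] ->.
rewrite sum1_card.
pose f := fun d : V => (a0 + d, b0 - d).
have finj : injective f by move=> d d' [/addrI].
rewrite -(card_imset _ finj); apply: eq_card => -[a b]; symmetry.
rewrite [RHS]unfold_in /= inE /=.
apply/imsetP/andP.
  case=> d; rewrite inE => /andP[hdA hdB] [-> ->]; split.
    by rewrite !qsubD // qsubN.
  by rewrite addrACA subrr addr0.
case=> /andP[ha hb] /eqP hs.
exists (a - a0).
  rewrite inE qsubB //=.
  have -> : a - a0 = b0 - b.
    by apply/eqP; rewrite subr_eq addrC addrA -hs addrK.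
  by rewrite qsubB.
rewrite /f addrC subrK; congr (_, _).
by rewrite opprB addrCA addrA -hs (addrC a) addrK.
Qed.

End Sub.


Lemma scalev_inj (L : fieldType) (V : lmodType L) (v : V) (c d : L) :
  v != 0 -> c *: v = d *: v -> c = d.
Proof.
move=> v0 /eqP; rewrite -subr_eq0 -scalerBl scaler_eq0 (negbTE v0) orbF subr_eq0.
by move/eqP.
Qed.

Lemma card_bigcup_seq (T I : finType) (s : seq I) (D : I -> {set T}) :
  uniq s -> (forall i j, i \in s -> j \in s -> i != j -> D i :&: D j = set0) ->
  #|\bigcup_(i <- s) D i| = (\sum_(i <- s) #|D i|)%N.
Proof.
elim: s => [|a s IH] /=; first by rewrite !big_nil cards0.
case/andP => aS us hD; rewrite !big_cons -IH //; last first.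
  by move=> i j hi hj; apply: hD; rewrite inE ?hi ?hj orbT.
rewrite cardsU.
suff -> : D a :&: \bigcup_(i <- s) D i = set0 by rewrite cards0 subn0.
apply/setP => x; rewrite !inE; apply/negbTE; apply/negP => /andP[xa].
rewrite bigcup_seq; case/bigcupP => j hj xj.
have : x \in D a :&: D j by rewrite inE xa xj.
rewrite hD ?inE ?eqxx ?hj ?orbT //.
by apply: contraNneq aS => ->.
Qed.

Lemma LsubP (L : finFieldType) n (W : {set 'rV[L]_n}) : Lsub W <->
  [/\ 0 \in W, forall x y, x \in W -> y \in W -> x + y \in W
    & forall c x, x \in W -> c *: x \in W].
Proof.
split.
  case/and3P => h0 /forall_inP hD /forallP hZ; split => //.
    by move=> x y hx hy; move: (hD x hx) => /forall_inP; apply.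
  by move=> c x hx; move: (hZ c) => /forall_inP; apply.
case=> h0 hD hZ; apply/and3P; split => //.
  by apply/forall_inP => x hx; apply/forall_inP => y hy; apply: hD.
by apply/forallP => c; apply/forall_inP => x hx; apply: hZ.
Qed.

Section Main.
Variables (L : finFieldType) (q n k t : nat).
Variables (nu Pi Omega Gamma : {set 'rV[L]_n}) (Bbar : {set {set 'rV[L]_n}}).
Local Notation V := 'rV[L]_n.
Local Notation Fq := (Fq L q).
Hypothesis Hk : (0 < k)%N.
Hypothesis Hkn : (k < n)%N.
Hypothesis Ht : (4 <= t)%N.
Hypothesis Hq : is_prime_power q.
Hypothesis HL : #|L| = (q ^ t)%N.
Hypothesis Hnu : Dsub q t nu (n - k).
Hypothesis HPi : pdim q Pi (n * t - k * t + 1).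
Hypothesis HnuPi : nu \subset Pi.
Hypothesis HLd : Ldim (Lspan (\bigcup_(X in Bset Pi) X)) (n - k + 1).
Hypothesis HOm : pdim q Omega (n * t - k * t - 2).
Hypothesis HOmPi : Omega \subset Pi.
Hypothesis HOn : pdim q (Omega :&: nu) (n * t - k * t - 4).
Hypothesis HGa : pdim q Gamma 2.
Hypothesis HGaPi : Gamma \subset Pi.
Hypothesis HOG : Omega :&: Gamma = [set 0].
Hypothesis HB : minimal_blocking_set q Gamma Bbar.

Let m := (n * t - k * t)%N.
Let t0 : (0 < t)%N. Proof. by apply: leq_trans Ht. Qed.
Let q1 : (1 < q)%N. Proof. exact: (q_gt1 Hq). Qed.
Let cFq : #|Fq| = q. Proof. exact: (card_Fq Hq HL t0). Qed.
Let FqN1 : (-1 : L) \in Fq. Proof. by apply: (FqN Hq HL); apply: Fq1. Qed.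
Let m4 : (4 <= m)%N.
Proof.
rewrite /m -mulnBl; apply: leq_trans Ht _; rewrite leq_pmull //.
by rewrite subn_gt0.
Qed.
Let mE : ((n - k) * t)%N = m. Proof. by rewrite /m mulnBl. Qed.

Let qnu : qsub q nu. Proof. by case: Hnu => -[]. Qed.
Let cnu : #|nu| = (q ^ m)%N.
Proof. case: Hnu => -[_ ->] _; rewrite mE prednK //; by apply: leq_trans m4. Qed.
Let qPi : qsub q Pi. Proof. by case: HPi. Qed.
Let cPi : #|Pi| = (q ^ m.+2)%N. Proof. by case: HPi => _ ->; rewrite addn1. Qed.
Let qOm : qsub q Omega. Proof. by case: HOm. Qed.
Let cOm : #|Omega| = (q ^ (m - 1))%N.
Proof. by case: HOm => _ ->; congr (_ ^ _)%N; rewrite -/m; lia. Qed.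
Let cOn : #|Omega :&: nu| = (q ^ (m - 3))%N.
Proof. by case: HOn => _ ->; congr (_ ^ _)%N; rewrite -/m; lia. Qed.
Let qGa : qsub q Gamma. Proof. by case: HGa. Qed.

Let nuL c x : x \in nu -> c *: x \in nu.
Proof.
case: Hnu => _ [S [hS ->]]; apply: qspan_Lclosed => c' y /bigcupP[X XS yX].
apply/bigcupP; exists X => //; case: (hS X XS) => v _ XE.
move: yX; rewrite XE => /imsetP[d _ ->]; apply/imsetP; exists (c' * d) => //.
by rewrite scalerA.
Qed.

Let key v c : v \in Pi -> v \notin nu -> c *: v \in Pi -> c \in Fq.
Proof.
move=> vPi vnu cvPi; apply/negPn/negP => cF.
pose g := fun x : V * (L * L) => x.1 + x.2.1 *: v + x.2.2 *: (c *: v).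
pose D := setX nu (setX Fq Fq).
have ginj : {in D &, injective g}.
  move=> [w [a b]] [w' [a' b']]; rewrite !in_setX /= => /andP[hw /andP[ha hb]] /andP[hw' /andP[ha' hb']].
  rewrite /g /= -!addrA => e.
  set x := a *: v + b *: (c *: v) in e; set y := a' *: v + b' *: (c *: v) in e.
  have hw'E : w' = (w + x) - y by rewrite e addrK.
  have ed : w' - w = (a - a' + (b - b') * c) *: v.
    rewrite hw'E addrAC (addrC w) addrK /x /y scalerDl !scalerBl -!scalerA.
    by rewrite scalerBl opprD addrACA.
  set e0 := a - a' + (b - b') * c in ed.
  have e00 : e0 = 0.
    apply/eqP; apply: contraNT vnu => e0n.
    have -> : v = e0^-1 *: (w' - w) by rewrite ed scalerA mulVf // scale1r.
    by apply: nuL; apply: (qsubB FqN1).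
  have bb : b = b'.
    apply/eqP; apply: contraNT cF; rewrite -subr_eq0 => bn.
    have -> : c = - (a - a') / (b - b').
      apply: (mulIf bn); rewrite mulfVK //; apply/eqP; rewrite -addr_eq0 addrC mulrC; apply/eqP; exact: e00.
    apply: FqM; first by apply: (FqN Hq HL); apply: (FqB Hq HL).
    by apply: FqV; apply: (FqB Hq HL).
  move/eqP: e00; rewrite /e0 bb subrr mul0r addr0 subr_eq0 => /eqP aa.
  move/eqP: ed; rewrite /e0 aa bb !subrr mul0r addr0 scale0r subr_eq0 => /eqP ww.
  by rewrite ww.
have gD : g @: D = Pi.
  apply/eqP; rewrite eqEcard; apply/andP; split.
    apply/subsetP => x /imsetP[[w [a b]]]; rewrite !in_setX /= => /andP[hw /andP[ha hb]] ->.
    rewrite /g /=; apply: (qsubD qPi); first apply: (qsubD qPi).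
    - by apply: (subsetP HnuPi).
    - exact: (qsubZ qPi).
    - exact: (qsubZ qPi).
  rewrite (card_in_imset ginj) /D !cardsX cFq cnu cPi.
  by rewrite !expnS mulnA mulnC.
pose T := [set x.1 + x.2 *: v | x in setX nu [set: L]].
have memT x : (x \in T) <-> exists w d, [/\ w \in nu & x = w + d *: v].
  split.
    by case/imsetP => -[w d]; rewrite !inE /= andbT => hw ->; exists w, d.
  by case=> w [d [hw ->]]; apply/imsetP; exists (w, d); rewrite // !inE hw.
have LT : Lsub T.
  apply/LsubP; split.
  - by apply/memT; exists 0, 0; rewrite scale0r addr0 (qsub0 qnu).
  - move=> x y /memT[w [d [hw ->]]] /memT[w' [d' [hw' ->]]].
    by apply/memT; exists (w + w'), (d + d'); rewrite (qsubD qnu) // scalerDl addrACA.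
  - move=> e x /memT[w [d [hw ->]]].
    by apply/memT; exists (e *: w), (e * d); rewrite nuL // scalerDr scalerA.
have sT : \bigcup_(X in Bset Pi) X \subset T.
  apply/subsetP => x /bigcupP[X /imsetP[u]]; rewrite !inE => /andP[_ uPi] -> /imsetP[d _ ->].
  move: uPi; rewrite -gD => /imsetP[[w [a b]]]; rewrite !in_setX /= => /andP[hw _] ->.
  apply/memT; exists (d *: w), (d * a + d * b * c); rewrite nuL //; split => //.
  by rewrite /g /= !scalerDr !scalerDl !scalerA addrA.
have : Lspan (\bigcup_(X in Bset Pi) X) \subset T.
  apply/subsetP => x; rewrite inE => /forallP /(_ T); rewrite LT sT /=; exact.
move/subset_leq_card; case: HLd => _ ->.
have : (#|T| <= #|nu| * #|L|)%N.
  by apply: leq_trans (leq_imset_card _ _) _; rewrite cardsX cardsT.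
move=> h1 h2; have := leq_trans h2 h1.
rewrite cnu HL -!expnM -expnD leq_exp2l // -mE.
rewrite mulnC mulSn mulnDl mul1n; set X := ((n - k) * t)%N. rewrite -[leqRHS]add0n leq_add2r leqn0 => /eqP t00; by move: t0; rewrite t00.
Qed.

Let solve_pow x a b : (x * q ^ a = q ^ b)%N -> (a <= b)%N -> x = (q ^ (b - a))%N.
Proof.
move=> h ab; have qa : (0 < q ^ a)%N by rewrite expn_gt0 (ltnW q1).
by apply/eqP; rewrite -(eqn_pmul2r qa) -expnD subnK // h.
Qed.

Let Fqv (x : V) : {set V} := [set c *: x | c in Fq].
Let qFqv x : qsub q (Fqv x).
Proof.
apply/qsubP; split.
- by apply/imsetP; exists 0; [exact: (Fq0 L Hq)|rewrite scale0r].
- move=> y z /imsetP[c hc ->] /imsetP[d hd ->]; apply/imsetP; exists (c + d).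
    exact: (FqD Hq HL).
  by rewrite scalerDl.
- move=> a y ha /imsetP[c hc ->]; apply/imsetP; exists (a * c); first exact: FqM.
  by rewrite scalerA.
Qed.
Let cFqv x : x != 0 -> #|Fqv x| = q.
Proof.
by move=> x0; rewrite card_imset ?cFq // => c d; apply: scalev_inj.
Qed.
Let Fqv_sub (W : {set V}) x : qsub q W -> x \in W -> Fqv x \subset W.
Proof. by move=> hW hx; apply/subsetP => y /imsetP[c hc ->]; exact: (qsubZ hW hc hx). Qed.
Let Fqv_mem x : x \in Fqv x.
Proof. by apply/imsetP; exists 1; rewrite ?scale1r // Fq1. Qed.

Let hpts P : P \in Bbar -> [/\ qsub q P, #|P| = q & P \subset Gamma].
Proof. by case: HB => hp _ _ /hp [[qP cP] sP]; split => //; rewrite cP expn1. Qed.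

Let Peq P p : P \in Bbar -> p \in P -> p != 0 -> P = Fqv p.
Proof.
move=> PB pP p0; have [qP cP _] := hpts PB.
apply/eqP; rewrite eq_sym eqEcard Fqv_sub //= cP cFqv //.
Qed.

Let C (P : {set V}) := sumset P Omega.
Let qC P : P \in Bbar -> qsub q (C P).
Proof. by move=> PB; have [qP _ _] := hpts PB; apply: qsub_sumset. Qed.
Let CPi P : P \in Bbar -> C P \subset Pi.
Proof.
move=> PB; have [qP _ sP] := hpts PB; apply: (sumset_sub qPi) => //.
exact: subset_trans sP HGaPi.
Qed.
Let OmC P : P \in Bbar -> Omega \subset C P.
Proof. by move=> PB; have [qP _ _] := hpts PB; exact: (sumsetSr Omega qP). Qed.

Let PO P : P \in Bbar -> P :&: Omega = [set 0].
Proof.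
move=> PB; have [qP _ sP] := hpts PB; apply/eqP; rewrite eqEsubset; apply/andP; split.
  by rewrite -HOG setIC setIS.
by rewrite sub1set inE (qsub0 qP) (qsub0 qOm).
Qed.

Let cC P : P \in Bbar -> #|C P| = (q ^ m)%N.
Proof.
move=> PB; have [qP cP _] := hpts PB.
have := card_sumset FqN1 qP qOm; rewrite -/(C P) PO // cards1 muln1 cP cOm -expnS.
by move=> ->; congr (_ ^ _)%N; move: m4; clear; lia.
Qed.

Let cOnu : #|sumset Omega nu| = (q ^ m.+2)%N.
Proof.
have := card_sumset FqN1 qOm qnu; rewrite cOn cOm cnu -expnD => /solve_pow ->.
  by congr (_ ^ _)%N; move: m4; clear; lia.
by move: m4; clear; lia.
Qed.

Let cCnu P : P \in Bbar -> #|C P :&: nu| = (q ^ (m - 2))%N.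
Proof.
move=> PB.
have e : #|sumset (C P) nu| = (q ^ m.+2)%N.
  apply/eqP; rewrite eqn_leq; apply/andP; split.
    by rewrite -cPi subset_leq_card // (sumset_sub qPi (CPi PB) HnuPi).
  rewrite -cOnu subset_leq_card //; apply/subsetP => x /mem_sumset[a [b [ha hb ->]]].
  by apply/mem_sumset; exists a, b; split => //; apply: (subsetP (OmC PB)).
have := card_sumset FqN1 (qC PB) qnu; rewrite e cC // cnu -expnD mulnC => /solve_pow ->.
  by congr (_ ^ _)%N; move: m4; clear; lia.
by move: m4; clear; lia.
Qed.

Let Cdisj P P' : P \in Bbar -> P' \in Bbar -> P != P' -> C P :&: C P' \subset Omega.
Proof.
move=> PB P'B neq; have [qP _ sP] := hpts PB; have [qP' _ sP'] := hpts P'B.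
apply/subsetP => x; rewrite inE => /andP[/mem_sumset[p [w [hp hw ->]]] /mem_sumset[p' [w' [hp' hw' e]]]].
have pp : p = p'.
  have : p - p' \in Omega :&: Gamma.
    rewrite inE; apply/andP; split.
      have -> : p - p' = w' - w.
        have hpp : p = p' + (w' - w) by rewrite addrA -e addrK.
        by rewrite {1}hpp addrC addKr.
      exact: (qsubB FqN1).
    by apply: (qsubB FqN1) => //; [apply: (subsetP sP)|apply: (subsetP sP')].
  by rewrite HOG inE subr_eq0 => /eqP.
case: (eqVneq p 0) => [->|p0]; first by rewrite add0r.
by move: neq; rewrite (Peq PB hp p0) (Peq P'B hp' _) -?pp ?eqxx.
Qed.

Let Bne : exists P, P \in Bbar.
Proof.
have cG : #|Gamma| = (q ^ 3)%N by case: HGa.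
have [x xG x0] : exists2 x, x \in Gamma & x != 0.
  apply/exists_inP; apply: contraTT isT; rewrite negb_exists_in => /forall_inP h.
  have : Gamma \subset [set 0].
    by apply/subsetP => y yG; rewrite inE; move: (h y yG); rewrite negbK.
  move/subset_leq_card; rewrite cG cards1 => h3.
  have : (1 < q ^ 3)%N by rewrite -{1}(expn0 q) ltn_exp2l.
  by rewrite ltnNge h3.
have [y yG yx] : exists2 y, y \in Gamma & y \notin Fqv x.
  apply/exists_inP; apply: contraTT isT; rewrite negb_exists_in => /forall_inP h.
  have : Gamma \subset Fqv x.
    by apply/subsetP => z zG; move: (h z zG); rewrite negbK.
  move/subset_leq_card; rewrite cG cFqv // => h3.
  have : (q < q ^ 3)%N by rewrite -{1}(expn1 q) ltn_exp2l.
  by rewrite ltnNge h3.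
have y0 : y != 0 by apply: contraNneq yx => ->; exact: (qsub0 (qFqv x)).
have xy : Fqv x :&: Fqv y = [set 0].
  apply/eqP; rewrite eqEsubset; apply/andP; split; last by rewrite sub1set inE (qsub0 (qFqv x)) (qsub0 (qFqv y)).
  apply/subsetP => z; rewrite !inE => /andP[/imsetP[c hc ->] /imsetP[d hd e]].
  case: (eqVneq d 0) => [d0|d0].
    by move: e; rewrite d0 scale0r => /eqP; rewrite scaler_eq0 (negbTE x0) orbF => /eqP->.
  case/negP: yx; apply/imsetP; exists (d^-1 * c); first by apply: FqM => //; apply: FqV.
  by rewrite -scalerA e scalerA mulVf // scale1r.
have hl : pdim q (sumset (Fqv x) (Fqv y)) 1.
  split; first exact: qsub_sumset.
  have := card_sumset FqN1 (qFqv x) (qFqv y); rewrite xy cards1 muln1 !cFqv // => ->.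
case: HB => _ hb _.
have [P PB _] := hb _ hl (sumset_sub qGa (Fqv_sub qGa xG) (Fqv_sub qGa yG)).
by exists P.
Qed.

Let K := cone q Omega Bbar.
Let KE : K = \bigcup_(P in Bbar) C P.
Proof.
by rewrite /K /cone; apply: eq_bigr => P PB; have [qP _ _] := hpts PB; rewrite qspan_sumset.
Qed.
Let KPi : K \subset Pi.
Proof. by rewrite KE; apply/bigcupsP => P PB; apply: CPi. Qed.
Let KZ c x : c \in Fq -> x \in K -> c *: x \in K.
Proof.
move=> hc; rewrite KE => /bigcupP[P PB xP]; apply/bigcupP; exists P => //.
exact: (qsubZ (qC PB) hc xP).
Qed.
Let OmK : Omega \subset K.
Proof.
case: Bne => P PB; rewrite KE; apply: subset_trans (OmC PB) _.
exact: (bigcup_sup P PB).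
Qed.

Let D P := C P :\: (Omega :|: nu).
Let cD P : P \in Bbar ->
  (#|D P| + (q ^ (m - 1) + q ^ (m - 2)) = q ^ m + q ^ (m - 3))%N.
Proof.
move=> PB.
have h2 := cardsID (Omega :|: nu) (C P).
have e1 : C P :&: (Omega :|: nu) = Omega :|: (C P :&: nu).
  by rewrite setIUr (setIidPr (OmC PB)).
have h1 := cardsUI Omega (C P :&: nu).
have e3 : Omega :&: (C P :&: nu) = Omega :&: nu.
  by rewrite setIA (setIidPl (OmC PB)).
rewrite e3 cOn cOm (cCnu PB) in h1.
rewrite e1 (cC PB) -/(D P) in h2.
by rewrite -h1 -h2 addnA (addnC #|D P|).
Qed.

Let cKn : #|K :\: nu| = (#|Omega :\: nu| + \sum_(P in Bbar) #|D P|)%N.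
Proof.
have -> : K :\: nu = (Omega :\: nu) :|: \bigcup_(P <- enum Bbar) D P.
  rewrite bigcup_seq; apply/setP => x; rewrite !inE; apply/idP/idP.
    case/andP => xnu; rewrite KE => /bigcupP[P PB xP].
    case xO : (x \in Omega); first by rewrite xnu.
    apply/orP; right; apply/bigcupP; exists P; first by rewrite mem_enum.
    by rewrite !inE xO xnu.
  case/orP => [/andP[-> xO]|/bigcupP[P]]; first by rewrite (subsetP OmK).
  rewrite mem_enum => PB; rewrite !inE negb_or => /andP[/andP[_ ->] xP] /=.
  by rewrite KE; apply/bigcupP; exists P.
rewrite cardsU.
have -> : (Omega :\: nu) :&: \bigcup_(P <- enum Bbar) D P = set0.
  apply/setP => x; rewrite !inE bigcup_seq; apply/negbTE; apply/negP.
  case/andP => /andP[_ xO] /bigcupP[P _]; by rewrite !inE xO.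
rewrite cards0 subn0 card_bigcup_seq ?enum_uniq ?big_enum //.
move=> P P'; rewrite !mem_enum => PB P'B neq; apply/setP => x; rewrite !inE.
apply/negbTE; apply/negP => /andP[/andP[]]; rewrite negb_or => /andP[xO _] xP /andP[_ xP'].
by move: (subsetP (Cdisj PB P'B neq) x); rewrite inE xP xP' (negbTE xO) => /(_ isT).
Qed.

Let LlineZ c (v : V) : c != 0 -> Lline (c *: v) = Lline v.
Proof.
move=> c0; apply/setP => y; apply/imsetP/imsetP => -[d _ ->].
  by exists (d * c); rewrite ?scalerA.
by exists (d / c); rewrite // scalerA mulfVK.
Qed.

Let fiber (v : V) : v \in K :\: nu ->
  [set x | (x \in K :\: nu) && (Lline x == Lline v)] = [set c *: v | c in Fq :\ 0].
Proof.
rewrite inE => /andP[vnu vK]; have vPi := subsetP KPi v vK.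
apply/setP => x; rewrite !inE; apply/idP/idP.
  case/andP => /andP[xnu xK] /eqP e.
  have : x \in Lline v by rewrite -e; apply/imsetP; exists 1; rewrite ?scale1r.
  case/imsetP => c _ xE; apply/imsetP; exists c => //.
  rewrite in_setD1 (key vPi vnu) ?andbT; last by rewrite -xE (subsetP KPi).
  by apply: contraNneq xnu => c0; rewrite xE c0 scale0r (qsub0 qnu).
case/imsetP => c; rewrite !inE => /andP[c0 cF] ->.
have cFq0 : c \in Fq by rewrite inE.
rewrite KZ // andbT (LlineZ v c0) eqxx andbT.
apply: contra vnu => h; rewrite -[v](scale1r) -(mulVf c0) -scalerA; exact: nuL.
Qed.

Let cfiber : #|K :\: nu| = (#|[set Lline x | x in K :\: nu]| * (q - 1))%N.
Proof.
rewrite -sum1_card (partition_big_imset (fun x : V => Lline x)) /= -sum_nat_const.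
apply: eq_bigr => l /imsetP[v vKn ->].
rewrite sum1dep_card fiber // card_imset; last by move=> c d; apply: scalev_inj; rewrite inE in vKn; case/andP: vKn => vnu _; apply: contraNneq vnu => ->; rewrite (qsub0 qnu).
have hD := cardsD1 0 Fq; rewrite (Fq0 L Hq) cFq add1n in hD.
move: hD; set z := #|Fq :\ 0|; clear; lia.
Qed.

Lemma main_sec : exists eps : int, 1 <= eps /\
    (#|Bset (cone q Omega Bbar)|%:Z =
       #|Bbar|%:Z * ((q ^ (n * t - k * t - 1))%:Z - (q ^ (n * t - k * t - 3))%:Z)
       + (q ^ (n * t - k * t - 2))%:Z + (q ^ (n * t - k * t - 3))%:Z + eps).
Proof.
rewrite -/m -/K.
set a := (q ^ (m - 3))%N.
have pm2 : (q ^ (m - 2) = q * a)%N.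
  by rewrite /a -expnS; congr (_ ^ _)%N; move: m4; clear; lia.
have pm1 : (q ^ (m - 1) = q * (q * a))%N.
  by rewrite /a -!expnS; congr (_ ^ _)%N; move: m4; clear; lia.
have pm0 : (q ^ m = q * (q * (q * a)))%N.
  by rewrite /a -!expnS; congr (_ ^ _)%N; move: m4; clear; lia.
set Kin := (K :&: nu) :\ 0.
set Kn := K :\: nu.
have e0 : K :\ 0 = Kin :|: Kn.
  apply/setP => x; rewrite !inE.
  case xnu : (x \in nu); rewrite /= ?andbT ?andbF ?orbF ?orFb //.
  by case: eqP => // x0; rewrite x0 (qsub0 qnu) in xnu.
have BKE : Bset K = [set Lline x | x in Kin] :|: [set Lline x | x in Kn].
  by rewrite /Bset e0 imsetU.
have disj : [set Lline x | x in Kin] :&: [set Lline x | x in Kn] = set0.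
  apply/setP => l; rewrite !inE; apply/negbTE; apply/negP.
  case/andP => /imsetP[x xin ->] /imsetP[y yn e].
  move: xin yn; rewrite !inE => /andP[x0 /andP[_ xnu]] /andP[ynu _].
  have : y \in Lline x by rewrite e; apply/imsetP; exists 1; rewrite ?scale1r.
  by case/imsetP => c _ yE; move: ynu; rewrite yE nuL.
have cBK : #|Bset K| = (#|[set Lline x | x in Kin]| + #|[set Lline x | x in Kn]|)%N.
  by rewrite BKE cardsU disj cards0 subn0.
have [w wOn w0] : exists2 w, w \in Omega :&: nu & w != 0.
  apply/exists_inP; apply: contraTT isT; rewrite negb_exists_in => /forall_inP h.
  have : Omega :&: nu \subset [set 0].
    by apply/subsetP => y yG; rewrite inE; move: (h y yG); rewrite negbK.
  move/subset_leq_card; rewrite cOn cards1 => h3.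
  have : (1 < q ^ (m - 3))%N by rewrite -{1}(expn0 q) ltn_exp2l //; move: m4; clear; lia.
  by rewrite ltnNge h3.
have eps1 : (0 < #|[set Lline x | x in Kin]|)%N.
  apply/card_gt0P; exists (Lline w); apply/imsetP; exists w => //.
  move: wOn; rewrite !inE w0 => /andP[wO ->]; by rewrite (subsetP OmK).
exists (#|[set Lline x | x in Kin]|%:Z); split; first by rewrite lez_nat.
set N := #|[set Lline x | x in Kn]|.
set E := #|[set Lline x | x in Kin]|.
set B := #|Bbar|.
have cDc : (\sum_(P in Bbar) #|D P| = B * (q * (q * (q * a)) + a - (q * (q * a) + q * a)))%N.
  rewrite -sum_nat_const; apply: eq_bigr => P PB.
  by have := cD PB; rewrite pm1 pm2 pm0 => <-; rewrite addnK.
have cOmn : (#|Omega :\: nu| + a = q * (q * a))%N.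
  by rewrite -pm1 -cOm -(cardsID nu Omega) cOn addnC.
have hD : (q * (q * a) + q * a <= q * (q * (q * a)) + a)%N.
  case: Bne => P PB; have := cD PB; rewrite pm1 pm2 pm0 => <-; exact: leq_addl.
have hKn := cKn; rewrite cDc -/Kn in hKn.
have hf := cfiber; rewrite -/Kn -/N hKn in hf.
rewrite cBK pm1 pm2 -/a.
have hq : (1 <= q)%N by apply: ltnW.
have hO := congr1 Posz cOmn; rewrite PoszD !PoszM in hO.
have hO' : #|Omega :\: nu|%:Z = q%:Z * (q%:Z * a%:Z) - a%:Z by rewrite -hO addrK.
move/(congr1 Posz): hf.
rewrite PoszD !PoszM -(subzn hD) -(subzn hq) !PoszD !PoszM hO' => h.
have hN : (N%:Z - (B%:Z * (q%:Z * (q%:Z * a%:Z) - a%:Z) + q%:Z * a%:Z + a%:Z)) * (q%:Z - 1%:Z) = 0.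
  rewrite mulrBl -h; ring.
move: hN => /eqP; rewrite mulf_eq0 subr_eq0 subr_eq0 => /orP[/eqP hNX|].
  rewrite -/N -/E hNX ?PoszM; ring.
move/eqP => qq; have q_1 : q = 1%N by case: qq.
by move: q1; rewrite q_1.
Qed.

End Main.


Theorem proposition4p12 (L : finFieldType) (q n k t : nat)
    (nu Pi Omega Gamma : {set 'rV[L]_n}) (Bbar : {set {set 'rV[L]_n}}) :
  (0 < k)%N -> (k < n)%N -> (4 <= t)%N ->
  is_prime_power q -> #|L| = (q ^ t)%N ->
  Dsub q t nu (n - k) ->
  pdim q Pi (n * t - k * t + 1) -> nu \subset Pi ->
  Ldim (Lspan (\bigcup_(X in Bset Pi) X)) (n - k + 1) ->
  pdim q Omega (n * t - k * t - 2) -> Omega \subset Pi ->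
  pdim q (Omega :&: nu) (n * t - k * t - 4) ->
  pdim q Gamma 2 -> Gamma \subset Pi -> Omega :&: Gamma = [set 0] ->
  minimal_blocking_set q Gamma Bbar ->
  (forall P, P \in Bbar -> P :&: nu = [set 0]) ->
  exists eps : int, 1 <= eps /\
    (#|Bset (cone q Omega Bbar)|%:Z =
       #|Bbar|%:Z * ((q ^ (n * t - k * t - 1))%:Z - (q ^ (n * t - k * t - 3))%:Z)
       + (q ^ (n * t - k * t - 2))%:Z + (q ^ (n * t - k * t - 3))%:Z + eps).
Proof.
move=> *; apply: main_sec; eassumption.
Qed.
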